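(* Let $\Pi_2$ be a PARITY$_2$ program. Then there is a canonical program $\Pi_2'$ with $var(\Pi_2')\subseteq\{x_1,x_2\}$ and $Ans(\Pi_2')=$ PARITY$_2$ $=\{\{x_1\},\{x_2\}\}$, such that $Ans(\Pi_2')$ equals the set of models (subsets of $\{x_1,x_2\}$) of $Comp(\Pi_2')$, and $|\Pi_2'|\le|\Pi_2|$.
   Context: A rule element is one of $\top$, $\bot$, $x$, $not\ x$, $not\ not\ x$, where $x$ is a variable. A (canonical) rule is $H\leftarrow B$ with $H$ a variable or $\bot$ and $B$ a finite set of rule elements; a canonical program is a finite set of rules. For a set of variables $I$: $I\models\top$; $I\not\models\bot$; $I\models x$ iff $I\models not\ not\ x$ iff $x\in I$; $I\models not\ x$ iff $x\notin I$; $I\models B$ iff $I$ satisfies every element of $B$; $I$ is closed under $H\leftarrow B$ if $I\models B$ implies $I\models H$. The reduct $\Pi^I$ replaces $not\ not\ x$ by $\top$ if $x\in I$ else $\bot$, and $not\ x$ by $\top$ if $x\notin I$ else $\bot$; $I$ is an answer set of $\Pi$ if $I$ is the least set closed under all rules of $\Pi^I$; $Ans(\Pi)$ is the set of answer sets; $var(\Pi)$ is the set of variables occurring in $\Pi$; $|\Pi|$ is the number of rules. Strings $w\in\{0,1\}^n$ are identified with $\{x_i:w_i=1\}$; PARITY$_n$ is the set of strings in $\{0,1\}^n$ with an odd number of 1's; a PARITY$_n$ program is a canonical program $\Pi$ with $var(\Pi)=\{x_1,\dots,x_n\}$ and $Ans(\Pi)=$ PARITY$_n$. Completion (over signature $\{x_1,\dots,x_n\}$):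 for a body $B$, $\tilde B$ is the conjunction of its elements with $not$ read as $\neg$. $Comp(\Pi)$ is the conjunction of: for each $x_i$, $x_i\leftrightarrow(\tilde B_1\vee\dots\vee\tilde B_m)$ where $x_i\leftarrow B_1,\dots,x_i\leftarrow B_m$ are all rules with head $x_i$ (empty disjunction $=\bot$); and for each rule $\bot\leftarrow B$, the formula $\neg\tilde B$. *)

(* Defs.v *)
From HB Require Import structures.
From mathcomp Require Import all_boot.
Set Implicit Arguments. Unset Strict Implicit. Unset Printing Implicit Defensive.

(* Variables: x_i is represented by the natural number i (x_1 = 1, x_2 = 2). *)
Definition var := nat.

Inductive elem := ETop | EBot | EPos of var | ENeg of var | ENN of var.

Definition elem_eqb (a b : elem) : bool :=
  match a, b with
  | ETop, ETop | EBot, EBot => true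
  | EPos x, EPos y | ENeg x, ENeg y | ENN x, ENN y => x == y
  | _, _ => false
  end.

Lemma elem_eqP : Equality.axiom elem_eqb.
Proof.
by case=> [||x|x|x] [||y|y|y] /=; try (by constructor);
  apply: (iffP eqP) => [->|[]].
Qed.

HB.instance Definition _ := hasDecEq.Build elem elem_eqP.

(* A rule H <- B: head [None] stands for _|_, [Some x] for variable x;
   the body B (a finite set) is represented by a list of elements. *)
Definition rule := (option var * seq elem)%type.
Definition program := seq rule.

Definition vset := var -> bool.

Definition sat_elem (I : vset) (e : elem) : bool :=
  match e with
  | ETop => true
  | EBot => false
  | EPos x => I x
  | ENeg x => ~~ I x
  | ENN x => I x
  end.

Definition sat_body (I : vset) (B : seq elem) : bool := all (sat_elem I) B.

Definition sat_head (I : vset) (H : option var) : bool :=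
  if H is Some x then I x else false.

Definition closed_rule (I : vset) (r : rule) : Prop :=
  sat_body I r.2 -> sat_head I r.1.

Definition closed_prog (I : vset) (P : program) : Prop :=
  forall r, r \in P -> closed_rule I r.

Definition reduct_elem (I : vset) (e : elem) : elem :=
  match e with
  | ENN x => if I x then ETop else EBot
  | ENeg x => if I x then EBot else ETop
  | e => e
  end.

Definition reduct (P : program) (I : vset) : program :=
  [seq (r.1, [seq reduct_elem I e | e <- r.2]) | r <- P].

Definition answer_set (P : program) (I : vset) : Prop :=
  closed_prog I (reduct P I) /\
  forall J : vset, closed_prog J (reduct P I) -> forall x, I x -> J x.

Definition elem_vars (e : elem) : seq var :=
  match e with
  | EPos x | ENeg x | ENN x => [:: x]
  | _ => [::]
  end.

Definition rule_vars (r : rule) : seq var :=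
  (if r.1 is Some x then [:: x] else [::]) ++ flatten (map elem_vars r.2).

Definition prog_vars (P : program) : seq var := flatten (map rule_vars P).

(* Number of rules |Pi|: rules are identified up to equality of heads and of
   bodies as sets, so duplicates in the list representation are not counted. *)
Definition rule_equiv (r s : rule) : bool :=
  (r.1 == s.1) && all (fun e => e \in s.2) r.2 && all (fun e => e \in r.2) s.2.

Fixpoint nrules (P : program) : nat :=
  match P with
  | [::] => 0
  | r :: P' => (if has (rule_equiv r) P' then 0 else 1) + nrules P'
  end.

Definition parity (n : nat) (I : vset) : Prop :=
  (forall x, I x -> 1 <= x <= n) /\ odd (count I (iota 1 n)).

Definition parity_program (n : nat) (P : program) : Prop :=
  (forall x, x \in prog_vars P <-> 1 <= x <= n) /\
  (forall I, answer_set P I <-> parity n I).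

Inductive form :=
  | FTop | FBot | FVar of var | FNot of form
  | FAnd of form & form | FOr of form & form | FIff of form & form.

Fixpoint eval (I : vset) (f : form) : bool :=
  match f with
  | FTop => true
  | FBot => false
  | FVar x => I x
  | FNot g => ~~ eval I g
  | FAnd g h => eval I g && eval I h
  | FOr g h => eval I g || eval I h
  | FIff g h => eval I g == eval I h
  end.

Definition elem_form (e : elem) : form :=
  match e with
  | ETop => FTop
  | EBot => FBot
  | EPos x => FVar x
  | ENeg x => FNot (FVar x)
  | ENN x => FNot (FNot (FVar x))
  end.

Definition body_form (B : seq elem) : form := foldr FAnd FTop (map elem_form B).

Definition comp (n : nat) (P : program) : form :=
  FAnd
    (foldr FAnd FTop
       [seq FIff (FVar i)
              (foldr FOr FBot [seq body_form r.2 | r <- P & r.1 == Some i])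
       | i <- iota 1 n])
    (foldr FAnd FTop [seq FNot (body_form r.2) | r <- P & r.1 == None]).

Definition comp_model (n : nat) (P : program) (I : vset) : Prop :=
  (forall x, I x -> 1 <= x <= n) /\ eval I (comp n P).

(* Main.v *)
Require Import Defs.
From mathcomp Require Import all_boot.

Lemma head_exists (P : program) (I : vset) x :
  answer_set P I -> I x -> exists2 r, r \in P & r.1 = Some x.
Proof.
move=> [Hc Hl] Ix.
case: (boolP (has (fun r : rule => r.1 == Some x) P)) => [/hasP [r rP /eqP]|Hn].
  by exists r.
pose J : vset := fun y => I y && (y != x).
have : closed_prog J (reduct P I).
  move=> r rin; have := Hc r rin; move: rin => /mapP [r0 r0P ->].
  rewrite /closed_rule /= => HI Hb.
  have HbI : sat_body I [seq reduct_elem I e | e <- r0.2].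
    apply/allP => e /mapP [e0 e0in ->]; move/allP: Hb => /(_ (reduct_elem I e0)).
    have -> : reduct_elem I e0 \in [seq reduct_elem I e | e <- r0.2] by apply/mapP; exists e0.
    move=> /(_ isT); clear e0in; case: e0 => //= y; first by rewrite /J => /andP[].
      by case: (I y).
    by case: (I y).
  move: (HI HbI); case: r0 r0P {HI Hb HbI} => [[h|] B] r0P //= Ih.
  rewrite /J Ih /=; apply/eqP => E; subst h.
  by move/hasP: Hn; apply; exists (Some x, B).
move=> /Hl /(_ x Ix); by rewrite /J eqxx andbF.
Qed.

Lemma nrules_pos (P : program) r : r \in P -> 0 < nrules P.
Proof.
elim: P r => //= a P IH r; rewrite in_cons => /orP [_|/IH].
  case: ifP => // /hasP [r' r'P _]; by rewrite add0n; exact: IH r'P.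
by move=> H; rewrite addnC ltn_addr.
Qed.

Lemma nrules_two (P : program) r1 r2 :
  r1 \in P -> r2 \in P -> r1.1 != r2.1 -> 1 < nrules P.
Proof.
elim: P r1 r2 => //= a P IH r1 r2.
rewrite !in_cons => /orP [/eqP->|H1] /orP [/eqP->|H2] Hne.
- by rewrite eqxx in Hne.
- case: ifP => [/hasP [r' r'P /andP [/andP [/eqP E _] _]]|_].
    by apply: (IH r' r2) => //; rewrite -E.
  by rewrite add1n ltnS; exact: nrules_pos H2.
- case: ifP => [/hasP [r' r'P /andP [/andP [/eqP E _] _]]|_].
    by apply: (IH r1 r') => //; rewrite -E.
  by rewrite add1n ltnS; exact: nrules_pos H1.
- by rewrite addnC ltn_addr // (IH r1 r2).
Qed.

Definition P2' : program := [:: (Some 1, [:: ENeg 2]); (Some 2, [:: ENeg 1])].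

Lemma closed_P2' (I J : vset) :
  closed_prog J (reduct P2' I) <-> ((~~ I 2 -> J 1) /\ (~~ I 1 -> J 2)).
Proof.
split.
  move=> H; split=> Hn.
    have := H (Some 1, [:: reduct_elem I (ENeg 2)]); rewrite /closed_rule /=.
    by rewrite (negbTE Hn) /=; apply.
  have := H (Some 2, [:: reduct_elem I (ENeg 1)]); rewrite /closed_rule /=.
  rewrite (negbTE Hn) /=; apply => //; by rewrite !in_cons eqxx orbT.
move=> [H1 H2] r; rewrite /reduct /= !in_cons orbF => /orP [/eqP->|/eqP->];
  rewrite /closed_rule /=; [case E: (I 2) => //= _; apply: H1; by rewrite E | case E: (I 1) => //= _; apply: H2; by rewrite E].
Qed.

Lemma ans_P2' I : answer_set P2' I <-> parity 2 I.
Proof.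
split.
  move=> HA; have Hr : forall x, I x -> 1 <= x <= 2.
    move=> x Ix; have [r] := @head_exists _ _ _ HA Ix.
    by rewrite !in_cons orbF => /orP [/eqP->|/eqP->] /= [<-].
  split => //; move: HA => [/closed_P2' [H1 H2] Hl] /=.
  case E1: (I 1); case E2: (I 2) => //=.
  - have Hcl : closed_prog (fun _ => false) (reduct P2' I).
      by apply/closed_P2'; rewrite E1 E2.
    by have := Hl _ Hcl 1; rewrite E1 => /(_ isT).
  - by move: (H1 (negbT E2)); rewrite E1.
move=> [Hr] /=; rewrite addn0 => Hodd.
have Hx : I 1 = ~~ I 2 by move: Hodd; case: (I 1); case: (I 2).
split.
  by apply/closed_P2'; rewrite Hx negbK; split=> //; case: (I 2).
move=> J /closed_P2' [H1 H2] x Ix.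
have := Hr x Ix; case: x Ix => [|[|[|]]] //= Ix _.
  by apply: H1; rewrite -Hx.
by apply: H2; rewrite Hx negbK.
Qed.

Theorem mainTheorem9 (P2 : program) :
  parity_program 2 P2 ->
  exists P2' : program,
    (forall x, x \in prog_vars P2' -> 1 <= x <= 2) /\
    (forall I, answer_set P2' I <-> parity 2 I) /\
    (forall I, answer_set P2' I <-> comp_model 2 P2' I) /\
    nrules P2' <= nrules P2.
Proof.
move=> [_ HP]; exists P2'; split.
  by move=> x; rewrite /= !in_cons orbF => /orP [/eqP->|/orP [/eqP->|/orP[/eqP->|/eqP->]]].
split; first exact: ans_P2'.
split.
  move=> I; split => [/ans_P2' [Hr Ho]|[Hr Hc]].
    split => //; move: Ho; rewrite /= addn0.
    by case: (I 1); case: (I 2).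
  apply/ans_P2'; split => //; move: Hc; rewrite /= addn0.
  by case: (I 1); case: (I 2).
have A1 : answer_set P2 (fun y => y == 1) by apply/HP; split=> // x /eqP->.
have A2 : answer_set P2 (fun y => y == 2) by apply/HP; split=> // x /eqP->.
have [r1 r1P E1] := @head_exists _ _ _ A1 (eqxx 1).
have [r2 r2P E2] := @head_exists _ _ _ A2 (eqxx 2).
by apply: (@nrules_two _ _ _ r1P r2P); rewrite E1 E2.
Qed.
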